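(* Let $(x,y)$ be a $\delta$-feasible assignment, $V_0\subseteq V$, and $d=\max_{a,b\in V_0}\mathrm{dist}_G(a,b)$. After group shifting on $V_0$ one obtains a $(\delta+d)$-feasible assignment $(x',y')$ in which at most one vertex of $V_0$ has a non-integral $y'$-value, and $\mathrm{radius}_{(x',y')}(v)\le\mathrm{radius}_{(x,y)}(v)$ for every $v\in V\setminus V_0$.
   Context: $G=(V,E)$ undirected unweighted graph with shortest-path distance $\mathrm{dist}_G$, $L:V\to\mathbb{N}$, $k$ a positive integer. An assignment is a pair $x:V\times V\to\mathbb{R}_{\ge0}$, $y:V\to\mathbb{R}_{\ge0}$; it is $\delta$-feasible if: (1) $\sum_u y_u=k$; (2) $x_{u,v}\le y_u$; (3) $\sum_v x_{u,v}\le L(u)y_u$; (4) $\sum_u x_{u,v}=1$; (5) $0\le y_u\le1$; (6) $x_{u,v}=0$ whenever $\mathrm{dist}_G(u,v)>\delta$; (7) $x_{u,v}\ge0$. $\mathrm{radius}_{(x,y)}(u)$ is the largest integer $i$ such that some $v$ has $\mathrm{dist}_G(v,u)=i$ and $x_{u,v}>0$ ($0$ if none). Shifting $\alpha$ from $a$ to $b$ (where $a\neq b$, $L(a)\le L(b)$, $0<\alpha\le\min(y_a,1-y_b)$): with $\epsilon=\alpha/y_a$, for each $v$ move $\epsilon x_{a,v}$ from $x_{a,v}$ to $x_{b,v}$, and increase $y_b$ by $\alpha$, decrease $y_a$ by $\alpha$. Group shifting on $V_0=\{v_1,\dots,v_\ell\}$, indexed so that $L(v_i)\le L(v_{i+1})$: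 as long as at least two vertices of $V_0$ have fractional (non-integral) $y$-value, let $a$ be the smallest and $b$ the largest index such that $y_{v_a}$ and $y_{v_b}$ are fractional, and shift $\min(y_{v_a},1-y_{v_b})$ from $v_a$ to $v_b$. *)

(* Defs.v *)
From HB Require Import structures.
From mathcomp Require Import all_boot all_order all_algebra.
Set Implicit Arguments. Unset Strict Implicit. Unset Printing Implicit Defensive.
Import Order.TTheory GRing.Theory Num.Theory.
Local Open Scope ring_scope.

Section Defs.
Variable T : finType.
Variable e : rel T.

Fixpoint within (n : nat) (u v : T) : bool :=
  (u == v) || (if n is n'.+1 then [exists w, e u w && within n' w v] else false).

(* shortest-path distance; None = infinity (disconnected). Shortest paths have
   fewer than #|T| edges, so searching n < #|T| suffices. *)
Definition dist (u v : T) : option nat :=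
  let n := find (fun n => within n u v) (iota 0 #|T|) in
  if (n < #|T|)%N then Some n else None.

(* extended-nat arithmetic / comparison, None = +infinity *)
Definition oadd (a b : option nat) : option nat :=
  match a, b with Some m, Some n => Some (m + n)%N | _, _ => None end.

Definition dist_gt (d delta : option nat) : bool :=
  match delta, d with
  | None, _ => false
  | Some _, None => true
  | Some dl, Some n => (dl < n)%N
  end.

(* d = max_{a,b in V0} dist(a,b) (0 if V0 empty, infinity if some pair disconnected) *)
Definition diam (V0 : seq T) : option nat :=
  foldr (fun a acc => foldr (fun b acc' =>
           match dist a b, acc' with
           | Some m, Some n => Some (maxn m n)
           | _, _ => None end) acc V0) (Some 0%N) V0.

Variable R : archiRealFieldType.

(* delta-feasibility (delta in extended naturals, None = no locality constraint) *)
Definition feasible (L : T -> nat) (k : nat) (delta : option nat)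
  (x : T -> T -> R) (y : T -> R) : Prop :=
  [/\ \sum_(u : T) y u = k%:R,
      (forall u v, x u v <= y u),
      (forall u, \sum_(v : T) x u v <= (L u)%:R * y u),
      (forall v, \sum_(u : T) x u v = 1)
    & [/\ (forall u, 0 <= y u <= 1),
         (forall u v, dist_gt (dist u v) delta -> x u v = 0)
       & (forall u v, 0 <= x u v)]].

Definition radius (x : T -> T -> R) (u : T) : nat :=
  \max_(v : T | 0 < x u v) odflt 0%N (dist v u).

Definition fractional (r : R) : bool := r \isn't a Num.int.

Definition shift (alpha : R) (a b : T) (x : T -> T -> R) (y : T -> R)
  : (T -> T -> R) * (T -> R) :=
  let eps := alpha / y a in
  (fun u v => if u == a then x a v - eps * x a v
              else if u == b then x b v + eps * x a v
              else x u v,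
   fun u => if u == a then y a - alpha
            else if u == b then y b + alpha else y u).

Definition gs_step (s : seq T) (xy : (T -> T -> R) * (T -> R))
  : (T -> T -> R) * (T -> R) :=
  let: (x, y) := xy in
  match [seq v <- s | fractional (y v)] with
  | a :: (_ :: _) as rest =>
      let b := last a rest in
      shift (Num.min (y a) (1 - y b)) a b x y
  | _ => xy
  end.

(* Each effective step
   makes one more vertex of s integral (and never breaks integrality), so
   size s iterations reach the point where the step no longer applies, after
   which further iterations are the identity. *)
Definition group_shift (s : seq T) (x : T -> T -> R) (y : T -> R)
  : (T -> T -> R) * (T -> R) :=
  iter (size s) (gs_step s) (x, y).
End Defs.

(* Main.v *)
Require Import Defs.
From HB Require Import structures.
From mathcomp Require Import all_boot all_order all_algebra.
From mathcomp Require Import lra.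
Import Order.TTheory GRing.Theory Num.Theory.
Set Implicit Arguments. Unset Strict Implicit. Unset Printing Implicit Defensive.
Local Open Scope ring_scope.

From mathcomp Require Import zify.
Lemma within_S (T : finType) (e : rel T) n u v : within e n u v -> within e n.+1 u v.
Proof.
elim: n u => [|n IH] u /=; first by rewrite orbF => /eqP ->; rewrite eqxx.
case/orP=> [->//|/existsP[w /andP[euw hw]]].
by apply/orP; right; apply/existsP; exists w; rewrite euw; exact: IH.
Qed.

Lemma within_add (T : finType) (e : rel T) j n u v : within e n u v -> within e (n + j) u v.
Proof.
elim: j => [|j IH]; first by rewrite addn0.
by move=> h; rewrite addnS; apply: within_S; apply: IH.
Qed.

Lemma within_trans (T : finType) (e : rel T) m n u w v :
  within e m u w -> within e n w v -> within e (m + n) u v.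
Proof.
elim: m u => [|m IH] u.
  by rewrite /= orbF => /eqP ->.
move=> hm h.
have [/eqP ->|] := boolP (u == w).
  by move: (within_add m.+1 h); rewrite addnC.
move=> nuw; move: hm; rewrite /= (negPf nuw) /= => /existsP[z /andP[euz hz]].
apply/orP; right; apply/existsP; exists z.
by rewrite euz (IH _ hz h).
Qed.

Lemma within_path (T : finType) (e : rel T) n u v :
  within e n u v -> exists p, [/\ path e u p, last u p = v & (size p <= n)%N].
Proof.
elim: n u => [|n IH] u /=.
  by rewrite orbF => /eqP ->; exists [::].
case/orP=> [/eqP ->|/existsP[z /andP[euz hz]]]; first by exists [::].
have [p [hp hl hs]] := IH _ hz.
by exists (z :: p); rewrite /= euz hp hl ltnS hs.
Qed.

Lemma path_within (T : finType) (e : rel T) u p :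
  path e u p -> within e (size p) u (last u p).
Proof.
elim: p u => [|z p IH] u /=; first by rewrite eqxx.
case/andP=> euz hp; apply/orP; right; apply/existsP; exists z.
by rewrite euz IH.
Qed.

Lemma within_small (T : finType) (e : rel T) n u v :
  within e n u v -> exists2 m, (m < #|T|)%N & within e m u v.
Proof.
move=> /within_path [p [hp hl _]].
rewrite -hl; case: (shortenP hp) => p' hp' hu _.
exists (size p'); last by apply: path_within.
have := max_card (mem (u :: p')).
by rewrite (card_uniqP hu).
Qed.

Lemma dist_le (T : finType) (e : rel T) j u v :
  within e j u v -> exists2 n, dist e u v = Some n & (n <= j)%N.
Proof.
move=> hj.
have [j1 [hj1 hw1 hle]] : exists j1, [/\ (j1 < #|T|)%N, within e j1 u v & (j1 <= j)%N].
  case: (ltnP j #|T|) => hjT; first by exists j.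
  have [m hm hw] := within_small hj.
  by exists m; split=> //; apply: leq_trans (ltnW hm) hjT.
have hf : (find (fun n => within e n u v) (iota 0 #|T|) <= j1)%N.
  rewrite leqNgt; apply/negP => /(before_find 0).
  by rewrite nth_iota // add0n hw1.
rewrite /dist; set f := find _ _ in hf *.
have -> : (f < #|T|)%N by apply: leq_ltn_trans hf hj1.
by exists f => //; apply: leq_trans hf hle.
Qed.

Lemma dist_within (T : finType) (e : rel T) u v n :
  dist e u v = Some n -> within e n u v.
Proof.
rewrite /dist; set f := find _ _.
case: ifP => // hf [<-].
have hh : has (fun n => within e n u v) (iota 0 #|T|) by rewrite has_find size_iota.
by have := nth_find 0 hh; rewrite -/f nth_iota // add0n.
Qed.

Lemma diam_inner (T : finType) (e : rel T) a t acc D :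
  foldr (fun b acc' => match dist e a b, acc' with
           | Some m, Some n => Some (maxn m n)
           | _, _ => None end) acc t = Some D ->
  (exists2 D0, acc = Some D0 & (D0 <= D)%N) /\
  (forall b, b \in t -> exists2 m, dist e a b = Some m & (m <= D)%N).
Proof.
elim: t D => [|b t IH] D /=; first by move=> ->; split=> //; exists D.
case hd: (dist e a b) => [m|] //.
case hf: (foldr _ _ t) => [n|] // [<-].
have [[D0 h1 h2] h3] := IH _ hf.
split; first by exists D0 => //; apply: leq_trans h2 (leq_maxr _ _).
move=> c; rewrite inE => /orP[/eqP ->|hc]; first by exists m => //; rewrite leq_maxl.
have [m' h4 h5] := h3 c hc; exists m' => //; apply: leq_trans h5 (leq_maxr _ _).
Qed.

Lemma diam_outer (T : finType) (e : rel T) s t D :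
  foldr (fun a acc => foldr (fun b acc' =>
           match dist e a b, acc' with
           | Some m, Some n => Some (maxn m n)
           | _, _ => None end) acc s) (Some 0%N) t = Some D ->
  forall a b, a \in t -> b \in s -> exists2 m, dist e a b = Some m & (m <= D)%N.
Proof.
elim: t D => [|a t IH] D //= hf c b.
have [[D0 h1 h2] h3] := diam_inner hf.
rewrite inE => /orP[/eqP ->|hc] hb; first exact: h3.
have [m h4 h5] := IH _ h1 c b hc hb; exists m => //; apply: leq_trans h5 h2.
Qed.

Lemma diam_le (T : finType) (e : rel T) s D a b :
  diam e s = Some D -> a \in s -> b \in s -> exists2 m, dist e a b = Some m & (m <= D)%N.
Proof. rewrite /diam => h; exact: (diam_outer h). Qed.

Definition Inv (T : finType) (R : archiRealFieldType) (L : T -> nat) (k : nat)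
  (s : seq T) (x : T -> T -> R) (xy : (T -> T -> R) * (T -> R)) : Prop :=
  [/\ \sum_(u : T) xy.2 u = k%:R,
      (forall u v, xy.1 u v <= xy.2 u),
      (forall u, \sum_(v : T) xy.1 u v <= (L u)%:R * xy.2 u),
      (forall v, \sum_(u : T) xy.1 u v = 1)
    & [/\ (forall u, 0 <= xy.2 u <= 1),
          (forall u v, 0 <= xy.1 u v),
          (forall u v, u \notin s -> xy.1 u v = x u v)
        & (forall u v, u \in s -> 0 < xy.1 u v -> exists2 w, w \in s & 0 < x w v)]].

Lemma sum_if1 (T : finType) (R : archiRealFieldType) (a : T) (c : R) :
  \sum_u (if u == a then c else 0) = c.
Proof. by rewrite (bigD1 a) //= eqxx big1 => [|u /negPf -> //]; rewrite addr0. Qed.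

Lemma sum_move (T : finType) (R : archiRealFieldType) (f g : T -> R) a b c :
  a != b ->
  (forall u, g u = f u + (if u == a then - c else 0) + (if u == b then c else 0)) ->
  \sum_u g u = \sum_u f u.
Proof.
move=> nab hg; rewrite (eq_bigr _ (fun u _ => hg u)) !big_split /= !sum_if1.
by rewrite -addrA addNr addr0.
Qed.

Lemma shift_inv (T : finType) (R : archiRealFieldType) (L : T -> nat) (k : nat)
  (s : seq T) (x : T -> T -> R) x1 y1 a b alpha :
  Inv L k s x (x1, y1) -> a \in s -> b \in s -> a != b -> (L a <= L b)%N ->
  0 < y1 a -> 0 <= alpha -> alpha <= y1 a -> alpha <= 1 - y1 b ->
  Inv L k s x (shift alpha a b x1 y1).
Proof.
move=> [/= h1 h2 h3 h4 [h5 h7 h8 h9]] ha hb nab hL ya0 al0 ala alb.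
set eps := alpha / y1 a.
have epsa : alpha = eps * y1 a by rewrite /eps mulfVK // gt_eqF.
have eps0 : 0 <= eps by rewrite /eps divr_ge0 // ltW.
have eps1 : eps <= 1 by rewrite /eps ler_pdivrMr // mul1r.
have nba : b != a by rewrite eq_sym.
rewrite /shift -/eps.
have cases : forall u, (u = a) + ((u = b) * (u != a)) + ((u != a) * (u != b)).
  move=> u; have [->|nua] := eqVneq u a; first by left; left.
  have [->|nub] := eqVneq u b; first by left; right.
  by right.
Ltac cs u cases nab nba :=
  case: (cases u) => [[->|[-> _]]|[/negPf -> /negPf ->]]; rewrite ?eqxx ?(negPf nab) ?(negPf nba).
split => /=.
- rewrite -h1; apply: (@sum_move _ _ y1 _ a b alpha nab) => u.
  cs u cases nab nba; lra.
- move=> u v; cs u cases nab nba.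
  + by have := h2 a v; have := h7 a v; nra.
  + have := h2 b v; have := h2 a v; have := h7 a v; nra.
  + exact: h2.
- move=> u; cs u cases nab nba.
  + rewrite sumrB -mulr_sumr; have := h3 a; have := (ler0n R (L a)).
    set S := \sum_v _; have : 0 <= S by apply: sumr_ge0 => v _.
    nra.
  + rewrite big_split /= -mulr_sumr; have := h3 b; have := h3 a.
    have : (L a)%:R <= (L b)%:R :> R by rewrite ler_nat.
    have := (ler0n R (L a)).
    set Sa := \sum_v x1 a v; have : 0 <= Sa by apply: sumr_ge0 => v _.
    nra.
  + exact: h3.
- move=> v; rewrite -(h4 v); apply: (@sum_move _ _ (fun u => x1 u v) _ a b (eps * x1 a v) nab) => u.
  cs u cases nab nba; lra.
split.
- move=> u; have := h5 u; have := h5 a; have := h5 b.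
  cs u cases nab nba; move=> /andP[? ?] /andP[? ?] /andP[? ?]; apply/andP; split; lra.
- move=> u v; have := h7 a v; have := h7 b v; have := h7 u v.
  cs u cases nab nba; nra.
- move=> u v us; case: (cases u) => [[eua|[eub _]]|[/negPf -> /negPf ->]].
  + by move: us; rewrite eua ha.
  + by move: us; rewrite eub hb.
  + exact: h8.
- move=> u v us; cs u cases nab nba.
  + move=> hp; apply: h9 ha _; have := h7 a v; nra.
  + move=> hp; have := h7 a v; have := h7 b v.
    have [hb0|hb0] := ltrP 0 (x1 b v); first by move=> *; apply: h9 hb hb0.
    have [ha0|ha0] := ltrP 0 (x1 a v); first by move=> *; apply: h9 ha ha0.
    move=> *; nra.
  + exact: h9.
Qed.

Lemma count_le_in (T : eqType) (f g : pred T) s :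
  {in s, forall u, g u -> f u} -> (count g s <= count f s)%N.
Proof.
elim: s => [|z s IH] hsub //=; apply: leq_add.
  by case gz: (g z) => //; rewrite (hsub z) ?mem_head.
by apply: IH => w ws; apply: hsub; rewrite inE ws orbT.
Qed.

Lemma count_lt (T : eqType) (f g : pred T) s :
  {in s, forall u, g u -> f u} -> (exists2 u, u \in s & f u && ~~ g u) ->
  (count g s < count f s)%N.
Proof.
elim: s => [|z s IH] hsub [u] //.
rewrite inE => /orP[/eqP eu|us] hu /=.
  subst z; case/andP: hu => -> /negPf -> /=; rewrite add0n add1n ltnS.
  apply: count_le_in => w ws; apply: hsub; by rewrite inE ws orbT.
have h1 : (g z <= f z)%N.
  by case gz: (g z) => //; rewrite (hsub z) ?mem_head.
rewrite -addnS; apply: leq_add h1 _; apply: IH; last by exists u.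
by move=> w ws; apply: hsub; rewrite inE ws orbT.
Qed.

Lemma frac_bounds (R : archiRealFieldType) (r : R) :
  0 <= r <= 1 -> fractional r -> 0 < r < 1.
Proof.
case/andP=> h0 h1 hf; rewrite !lt_neqAle h0 h1 !andbT.
apply/andP; split; apply/eqP => h; move: hf; rewrite /fractional.
  by rewrite -h int_num0.
by rewrite h int_num1.
Qed.

Definition fcount (T : finType) (R : archiRealFieldType) (s : seq T)
  (xy : (T -> T -> R) * (T -> R)) := count (fun v => fractional (xy.2 v)) s.

Lemma step_prop (T : finType) (R : archiRealFieldType) (L : T -> nat) (k : nat)
  (s : seq T) (x : T -> T -> R) xy :
  uniq s -> sorted (fun a b => (L a <= L b)%N) s ->
  Inv L k s x xy ->
  Inv L k s x (gs_step s xy) /\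
  ((fcount s xy <= 1)%N /\ gs_step s xy = xy \/ (fcount s (gs_step s xy) < fcount s xy)%N).
Proof.
case: xy => x1 y1 us ss hI.
have hcnt : fcount s (x1, y1) = size [seq v <- s | fractional (y1 v)] by rewrite size_filter.
rewrite /gs_step.
case hf: [seq v <- s | fractional (y1 v)] => [|a [|c rest]].
- by split=> //; left; rewrite hcnt hf.
- by split=> //; left; rewrite hcnt hf.
set b := last a (c :: rest).
have mf : forall w, w \in a :: c :: rest -> w \in s /\ fractional (y1 w).
  by move=> w; rewrite -hf mem_filter => /andP[].
have bin : b \in c :: rest by rewrite /b /=; apply: mem_last.
have [as_ fa] := mf a (mem_head _ _).
have bin2 : b \in a :: c :: rest by rewrite inE bin orbT.
have [bs fb] := mf b bin2.
have nab : a != b.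
  have := filter_uniq (fun v => fractional (y1 v)) us; rewrite hf /= => /andP[ha _].
  by apply: contraNneq ha => ->.
have hL : (L a <= L b)%N.
  have tr : transitive (fun a b : T => (L a <= L b)%N) by move=> ? ? ? ; apply: leq_trans.
  have := sorted_filter tr (fun v => fractional (y1 v)) ss; rewrite hf.
  move=> hp; have /allP := order_path_min tr hp; apply; exact: bin.
have [_ _ _ _ [h5 _ _ _]] := hI.
have /andP[ya0 ya1] : 0 < y1 a < 1 by apply: frac_bounds.
have /andP[yb0 yb1] : 0 < y1 b < 1 by apply: frac_bounds.
set alpha := Num.min (y1 a) (1 - y1 b).
have al0 : 0 <= alpha by rewrite /alpha le_min ltW //= subr_ge0 ltW.
have ala : alpha <= y1 a by rewrite /alpha ge_min lexx.
have alb : alpha <= 1 - y1 b by rewrite /alpha ge_min lexx orbT.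
split; first exact: shift_inv hI as_ bs nab hL ya0 al0 ala alb.
right; rewrite /fcount; apply: count_lt.
  move=> u us' /=; rewrite /shift /=.
  have [->|nua] := eqVneq u a; first by rewrite fa.
  have [->|nub] := eqVneq u b; first by rewrite fb.
  by rewrite ?(negPf nua) ?(negPf nub).
rewrite /shift /=.
have nba : b != a by rewrite eq_sym.
case: (lerP (y1 a) (1 - y1 b)) => hab.
- exists a => //; rewrite fa eqxx /=.
  have -> : alpha = y1 a by rewrite /alpha; apply/min_idPl.
  by rewrite subrr /fractional int_num0.
- exists b => //; rewrite fb (negPf nba) eqxx /=.
  have -> : alpha = 1 - y1 b by rewrite /alpha; apply/min_idPr; rewrite ltW.
  by rewrite addrC subrK /fractional int_num1.
Qed.

Lemma iter_prop (T : finType) (R : archiRealFieldType) (L : T -> nat) (k : nat)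
  (s : seq T) (x : T -> T -> R) xy :
  uniq s -> sorted (fun a b => (L a <= L b)%N) s ->
  Inv L k s x xy -> forall n,
  Inv L k s x (iter n (gs_step s) xy) /\
  (fcount s (iter n (gs_step s) xy) <= maxn 1 (size s - n))%N.
Proof.
move=> us ss hI; elim=> [|n [IH1 IH2]].
  by split=> //=; rewrite subn0 (leq_trans (count_size _ _)) // leq_maxr.
have [hI' [[hc he]|hlt]] := step_prop us ss IH1; rewrite /= ; split=> //.
  by rewrite he; apply: leq_trans hc (leq_maxl _ _).
move: hlt IH2; set c1 := fcount _ _; set c0 := fcount _ _; lia.
Qed.

Theorem mainTheorem10 (T : finType) (e : rel T)
  (e_sym : symmetric e) (e_irr : irreflexive e)
  (R : archiRealFieldType) (L : T -> nat) (k : nat) (k_pos : (0 < k)%N)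
  (delta : nat) (x : T -> T -> R) (y : T -> R)
  (s : seq T) (s_uniq : uniq s) (s_sorted : sorted (fun a b => (L a <= L b)%N) s) :
  feasible e L k (Some delta) x y ->
  let d := diam e s in
  let xy' := group_shift s x y in
  [/\ feasible e L k (oadd (Some delta) d) xy'.1 xy'.2,
      (count (fun v => fractional (xy'.2 v)) s <= 1)%N
    & forall v, v \notin s -> (radius e xy'.1 v <= radius e x v)%N].
Proof.
move=> [h1 h2 h3 h4 [h5 h6 h7]] d xy'.
have hI0 : Inv L k s x (x, y).
  split=> //; split=> // u v us hp; by exists u.
have [hI hc] := iter_prop s_uniq s_sorted hI0 (size s).
rewrite subnn in hc.
case: hI => [g1 g2 g3 g4 [g5 g7 g8 g9]].
split; last first.
- move=> v vs; rewrite /radius (eq_bigl (fun w => 0 < x v w)) // => w.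
  by rewrite /xy' /group_shift g8.
- exact: hc.
split=> //; split=> // u v hgt.
case hd: (diam e s) => [D|]; last by move: hgt; rewrite /d hd.
move: hgt; rewrite /d hd /= => hgt.
have [us|nus] := boolP (u \in s); last first.
  rewrite /xy' /group_shift g8 //; apply: h6; move: hgt.
  by case: (dist e u v) => //= n; lia.
have := g7 u v; rewrite le_eqVlt => /orP[/eqP <- //|hp].
have [w ws hw] := g9 u v us hp.
have [n hdn hn] : exists2 n, dist e w v = Some n & (n <= delta)%N.
  case hdw: (dist e w v) => [n|]; last by move: (h6 w v); rewrite hdw /= => /(_ isT) h; move: hw; rewrite h ltxx.
  exists n => //; rewrite leqNgt; apply/negP => hlt.
  by move: (h6 w v); rewrite hdw /= => /(_ hlt) h; move: hw; rewrite h ltxx.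
have [m hdm hm] := diam_le hd us ws.
have hw2 := within_trans (dist_within hdm) (dist_within hdn).
have [n' hdn' hn'] := dist_le hw2.
by move: hgt; rewrite hdn' /=; lia.
Qed.
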